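(* Assume $\mathcal A$ is closed and star shaped, $\mathcal P$ is closed and star shaped, and $V_0$ is lower semicontinuous and star shaped. Then for every scalable acceptable deal $x\in\mathbb R^N$ and every $\lambda>0$ we have $\lambda x\in\mathcal P$, $V_0(\lambda x)\le0$ and $\lambda V_1(x)\in\mathcal A$. In particular, every scalable acceptable deal is an acceptable deal.
   Context: Standing setup: Let $\mathcal{X}$ be a real topological vector space partially ordered by a convex cone $\mathcal{X}_+\subset\mathcal X$; write $X\ge Y$ iff $X-Y\in\mathcal X_+$. Fix $N\in\mathbb N$ and: a set $\mathcal P\subset\mathbb R^N$ with $0\in\mathcal P$; a function $V_0:\mathbb R^N\to\mathbb R$ with $V_0(0)=0$ and $V_0(x)\ge -V_0(-x)$ for all $x\in\mathbb R^N$; a map $V_1:\mathbb R^N\to\mathcal X$ with $V_1(0)=0$ and $V_1(x)\le -V_1(-x)$ for all $x\in\mathbb R^N$; a set $\mathcal A\subset\mathcal X$ with $0\in\mathcal A$ and $\mathcal A+\mathcal X_+\subset\mathcal A$. A set $C$ is star shaped if $\lambda C\subset C$ for all $\lambda\in[0,1]$; a function $f$ is star shaped if $f(\lambda x)\le\lambda f(x)$ for all $\lambda\in[0,1]$. Asymptotic notions: for a nonempty set $C$ in a topological vector space, $C^\infty=\{X:\exists\text{ nets }(X_\alpha)\subset C,\ (\lambda_\alpha)\subset[0,\infty),\ \lambda_\alpha\to0,\ \lambda_\alpha X_\alpha\to X\}$. For $f:\mathbb R^N\to\mathbb R$, its asymptotic function $f^\infty:\mathbb R^N\to[-\infty,\infty]$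 is the function whose epigraph $\{(x,m)\in\mathbb R^N\times\mathbb R: f^\infty(x)\le m\}$ equals $(\operatorname{epi}f)^\infty$, where $\operatorname{epi}f=\{(x,m)\in\mathbb R^N\times\mathbb R: f(x)\le m\}$. A portfolio $x\in\mathbb R^N$ is an acceptable deal if $x\in\mathcal P$, $V_0(x)\le0$ and $V_1(x)\in\mathcal A\setminus\{0\}$; it is a scalable acceptable deal if $x\in\mathcal P^\infty$, $V_0^\infty(x)\le0$ and $V_1(x)\in\mathcal A^\infty\setminus\{0\}$. *)

(* Defs.v *)
From mathcomp Require Import all_boot all_algebra.
From mathcomp Require Import all_classical all_reals all_analysis.

Set Implicit Arguments.
Unset Strict Implicit.
Unset Printing Implicit Defensive.

Import GRing.Theory Num.Theory.
Local Open Scope classical_set_scope.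
Local Open Scope ring_scope.

Definition directed_set (I : Type) (le : I -> I -> Prop) : Prop :=
  [/\ inhabited I,
      (forall i, le i i),
      (forall i j k, le i j -> le j k -> le i k) &
      (forall i j, exists k, le i k /\ le j k)].

Definition net_cvg (T : topologicalType) (I : Type) (le : I -> I -> Prop)
  (f : I -> T) (x : T) : Prop :=
  forall U : set T, nbhs x U -> exists i0, forall i, le i0 i -> U (f i).

Definition asym_cone (R : realType) (T : topologicalLmodType R) (C : set T)
  : set T :=
  [set X | exists (I : Type) (le : I -> I -> Prop),
     directed_set le /\
     exists (Xa : I -> T) (la : I -> R),
       [/\ (forall i, C (Xa i)),
           (forall i, 0 <= la i),
           net_cvg le (la : I -> R^o) 0 &
           net_cvg le (fun i => la i *: Xa i) X]].

Definition epi (R : realType) (N : nat) (f : 'rV[R]_N -> R)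
  : set ('rV[R]_N * R^o) :=
  [set p | f p.1 <= p.2].

(* The asymptotic function f^oo is the (extended-real valued) function whose
   epigraph is (epi f)^oo; hence  f^oo(x) <= m  means  (x, m) \in (epi f)^oo. *)
Definition asym_fun_le (R : realType) (N : nat) (f : 'rV[R]_N -> R)
  (x : 'rV[R]_N) (m : R) : Prop :=
  asym_cone (epi f) (x, (m : R^o)).

Definition star_shaped_set (R : realType) (T : lmodType R) (C : set T) : Prop :=
  forall l : R, 0 <= l <= 1 -> forall x, C x -> C (l *: x).

Definition star_shaped_fun (R : realType) (N : nat) (f : 'rV[R]_N -> R) : Prop :=
  forall (l : R) (x : 'rV[R]_N), 0 <= l <= 1 -> f (l *: x) <= l * f x.

Definition convex_cone (R : realType) (T : lmodType R) (K : set T) : Prop :=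
  [/\ K 0,
      (forall x y, K x -> K y -> K (x + y)) &
      (forall (l : R) x, 0 <= l -> K x -> K (l *: x))].

Definition cone_le (R : realType) (T : lmodType R) (K : set T) (X Y : T) : Prop :=
  K (Y - X).

Definition acceptable_deal (R : realType) (N : nat) (T : topologicalLmodType R)
  (P : set 'rV[R]_N) (V0 : 'rV[R]_N -> R) (V1 : 'rV[R]_N -> T) (A : set T)
  (x : 'rV[R]_N) : Prop :=
  [/\ P x, V0 x <= 0, A (V1 x) & V1 x <> 0].

Definition scalable_acceptable_deal (R : realType) (N : nat)
  (T : topologicalLmodType R)
  (P : set 'rV[R]_N) (V0 : 'rV[R]_N -> R) (V1 : 'rV[R]_N -> T) (A : set T)
  (x : 'rV[R]_N) : Prop :=
  [/\ asym_cone P x, asym_fun_le V0 x 0, asym_cone A (V1 x) & V1 x <> 0].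

(* Main.v *)
Require Import Defs.
From mathcomp Require Import all_boot all_algebra.
From mathcomp Require Import all_classical all_reals all_analysis.
Import GRing.Theory Num.Theory.
Import order.Order.TTheory.
Local Open Scope classical_set_scope.
Local Open Scope ring_scope.

Lemma small_nbhs (R : realType) (e : R) : 0 < e -> nbhs (0 : R^o) [set y : R^o | `|y| < e].
Proof.
move=> e0; apply/nbhs_ballP; exists e => //= y; by rewrite /ball /= sub0r normrN.
Qed.

Lemma asym_star {R : realType} {T : topologicalLmodType R} {C : set T} :
  closed C -> star_shaped_set C -> forall X, asym_cone C X ->
  forall l : R, 0 < l -> C (l *: X).
Proof.
move=> cC sC X [I [le [[[i0] lrefl ltrans lup] [Xa [la [CX la0 cla cX]]]]]] l l0.
apply: cC => B /= BlX.
have := scale_continuous ((l : R^o), X) B BlX; case => -[U1 U2] /= [nU1 nU2] UB.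
have [i1 Hi1] := cX U2 nU2.
have li0 : 0 < l^-1 by rewrite invr_gt0.
have [i2 Hi2] := cla _ (@small_nbhs _ _ li0).
have [k [k1 k2]] := lup i1 i2.
exists (l *: (la k *: Xa k)); split.
  rewrite scalerA; apply: sC => //.
  have := Hi2 k k2; rewrite /= ger0_norm // => lk.
  rewrite mulr_ge0 ?(ltW l0) ?la0 //=.
  by move: lk; rewrite -(ltr_pM2l l0) mulfV ?lt0r_neq0 // => /ltW.
have := UB ((l : R^o), la k *: Xa k). apply; split => /=; [exact: (nbhs_singleton nU1) | exact: Hi1].
Qed.

Theorem mainTheorem6 (R : realType) (X : topologicalLmodType R)
  (Xplus : set X) (N : nat) (P : set 'rV[R]_N) (V0 : 'rV[R]_N -> R)
  (V1 : 'rV[R]_N -> X) (A : set X) :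
  convex_cone Xplus ->
  P 0 ->
  V0 0 = 0 ->
  (forall x, - V0 (- x) <= V0 x) ->
  V1 0 = 0 ->
  (forall x, cone_le Xplus (V1 x) (- V1 (- x))) ->
  A 0 ->
  (forall a k, A a -> Xplus k -> A (a + k)) ->
  (* hypotheses of the theorem *)
  closed A -> star_shaped_set A ->
  closed (P : set ('rV[R]_N : normedModType R)) -> star_shaped_set P ->
  lower_semicontinuous (fun x : ('rV[R]_N : normedModType R) => (V0 x)%:E) -> star_shaped_fun V0 ->
  forall x, scalable_acceptable_deal P V0 V1 A x ->
    (forall l : R, 0 < l ->
       [/\ P (l *: x), V0 (l *: x) <= 0 & A (l *: V1 x)])
    /\ acceptable_deal P V0 V1 A x.
Proof.
move=> _ _ _ _ _ _ _ _ cA sA cP sP lsc sV x [Px Vx Ax nz].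
have H : forall l : R, 0 < l -> [/\ P (l *: x), V0 (l *: x) <= 0 & A (l *: V1 x)].
  move=> l l0; split.
  - exact: (asym_star cP sP _ Px _ l0).
  - have : epi V0 (l *: ((x, 0 : R^o))); last by rewrite /epi /= scaler0.
    apply: (asym_star _ _ _ Vx _ l0).
    + move=> [y m] cl; rewrite /epi /=; rewrite leNgt; apply/negP => mlt.
      pose a := (m + V0 y) / 2.
      have ma : m < a by rewrite /a ltr_pdivlMr // mulr2n mulrDr mulr1 ltrD2l.
      have aV : a < V0 y by rewrite /a ltr_pdivrMr // mulr2n mulrDr mulr1 ltrD2r.
      have [W nW HW] := lsc y a (aV : (a%:E < (V0 y)%:E)%E).
      have [[z r] [/= Vz [/= Wz ra]]] : (epi V0 `&` (W `*` [set r : R^o | r < a])) !=set0.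
        apply: cl; exists (W, [set r : R^o | r < a]) => //; split => //=.
        exact: (lt_nbhsl ma).
      have := HW z Wz; rewrite lte_fin => /lt_le_trans /(_ Vz).
      by rewrite ltNge (ltW ra).
    + move=> t /andP [t0 t1] [y m]; rewrite /epi /= => hm.
      apply: (le_trans (sV t y _)); first by rewrite t0 t1.
      by rewrite ler_wpM2l.
  - exact: (asym_star cA sA _ Ax _ l0).
split => //; have [h1 h2 h3] := H 1 ltr01.
by rewrite !scale1r in h1 h2 h3; split.
Qed.
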